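(* Let $n=2k+1$ be odd and let $B$ be an $n\times n$ ASM. Then there exist $n\times n$ permutation matrices $P_1,\ldots,P_k,P_{k+2},\ldots,P_n$ such that $[P_1,\ldots,P_k,B,P_{k+2},\ldots,P_n]$ (with $B$ as the $(k+1)$-st horizontal plane) is an $n\times n\times n$ ASHM.
   Context: An $n\times n$ alternating sign matrix (ASM) is an $n\times n$ matrix with entries in $\{0,1,-1\}$ such that in every row and column the nonzeros alternate in sign, beginning and ending with $+1$. An $n\times n\times n$ hypermatrix $[A_1,\ldots,A_n]$ ($A_s$ the horizontal planes) is an ASHM if all entries are in $\{0,\pm1\}$ and in every line (obtained by fixing two of the three indices) the nonzeros alternate in sign beginning and ending with $+1$. *)

(* Defs.v *)
From HB Require Import structures.
From mathcomp Require Import all_boot all_order all_algebra all_fingroup.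
Set Implicit Arguments. Unset Strict Implicit. Unset Printing Implicit Defensive.
Import GRing.Theory Num.Theory.
Local Open Scope ring_scope.

(* A finite sequence of integers is "alternating sign": all entries are in
   {0,1,-1} and the nonzero entries, read in order, are +1,-1,+1,...,-1,+1
   (alternate in sign, begin and end with +1; in particular nonempty). *)
Definition alt_sign (s : seq int) : bool :=
  let t := [seq x <- s | x != 0] in
  [&& all (fun x => x \in [:: 0; 1; -1]) s,
      odd (size t) &
      t == [seq (-1) ^+ i | i <- iota 0 (size t)]].

Definition line n (f : 'I_n -> int) : seq int := [seq f j | j <- enum 'I_n].

Definition is_ASM n (A : 'M[int]_n) : bool :=
  [forall i : 'I_n, alt_sign (line (fun j => A i j))] &&
  [forall j : 'I_n, alt_sign (line (fun i => A i j))].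

(* An n x n x n hypermatrix, H s i j = entry (i,j) of the s-th horizontal plane A_s. *)
Definition hypermatrix n := 'I_n -> 'I_n -> 'I_n -> int.

Definition is_ASHM n (H : hypermatrix n) : bool :=
  [forall s : 'I_n, forall i : 'I_n, alt_sign (line (fun j => H s i j))] &&
  [forall s : 'I_n, forall j : 'I_n, alt_sign (line (fun i => H s i j))] &&
  [forall i : 'I_n, forall j : 'I_n, alt_sign (line (fun s => H s i j))].

(* Main.v *)
Require Import Defs.
From HB Require Import structures.
From mathcomp Require Import all_boot all_order all_algebra all_fingroup.
From mathcomp Require Import zify.
Set Implicit Arguments. Unset Strict Implicit. Unset Printing Implicit Defensive.


Definition dl n (a b : 'I_n) : 'I_n -> 'I_n -> nat := fun i j => (i == a) && (j == b).
Definition rs n (E : 'I_n -> 'I_n -> nat) i := \sum_j E i j.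
Definition cs n (E : 'I_n -> 'I_n -> nat) j := \sum_i E i j.
Definition tot n (E : 'I_n -> 'I_n -> nat) := \sum_i \sum_j E i j.

Lemma sum_eq1 n (a : 'I_n) : \sum_i ((i == a) : nat) = 1.
Proof. by rewrite (bigD1 a) //= eqxx big1 // => i /negbTE ->. Qed.

Lemma rs_dl n (a b i : 'I_n) : rs (dl a b) i = (i == a).
Proof.
rewrite /rs /dl; case: (i == a) => /=; first by rewrite sum_eq1.
by rewrite big1.
Qed.

Lemma cs_dl n (a b j : 'I_n) : cs (dl a b) j = (j == b).
Proof.
rewrite /cs /dl; case: (j == b) => /=; last by rewrite big1 // => i _; rewrite andbF.
by rewrite -(sum_eq1 a); apply: eq_bigr => i _; rewrite andbT.
Qed.

Lemma rs_eqn n (E X E' Y : 'I_n -> 'I_n -> nat) :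
  (forall i j, E i j + X i j = E' i j + Y i j) ->
  forall i, rs E i + rs X i = rs E' i + rs Y i.
Proof. by move=> h i; rewrite /rs -!big_split; apply: eq_bigr => j _; apply: h. Qed.

Lemma cs_eqn n (E X E' Y : 'I_n -> 'I_n -> nat) :
  (forall i j, E i j + X i j = E' i j + Y i j) ->
  forall j, cs E j + cs X j = cs E' j + cs Y j.
Proof. by move=> h j; rewrite /cs -!big_split; apply: eq_bigr => i _; apply: h. Qed.

Lemma tot_eqn n (E X E' Y : 'I_n -> 'I_n -> nat) :
  (forall i j, E i j + X i j = E' i j + Y i j) ->
  tot E + tot X = tot E' + tot Y.
Proof.
move=> h; rewrite /tot -!big_split; apply: eq_bigr => i _.
by have := rs_eqn h i; rewrite /rs.
Qed.

Lemma rs_add n (X Y : 'I_n -> 'I_n -> nat) i : rs (fun i j => X i j + Y i j) i = rs X i + rs Y i.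
Proof. by rewrite /rs big_split. Qed.
Lemma cs_add n (X Y : 'I_n -> 'I_n -> nat) i : cs (fun i j => X i j + Y i j) i = cs X i + cs Y i.
Proof. by rewrite /cs big_split. Qed.
Lemma tot_add n (X Y : 'I_n -> 'I_n -> nat) : tot (fun i j => X i j + Y i j) = tot X + tot Y.
Proof. by rewrite /tot -big_split; apply: eq_bigr => i _; rewrite big_split. Qed.
Lemma tot_dl n (a b : 'I_n) : tot (dl a b) = 1.
Proof. by rewrite /tot -(sum_eq1 a); apply: eq_bigr => i _; rewrite -(rs_dl a b). Qed.

Lemma odd_pos n (f : 'I_n -> nat) : odd (\sum_i f i) -> exists i, 0 < f i.
Proof.
move=> Ho; case: (pickP (fun i => 0 < f i)) => [i Hi|H]; first by exists i.
move: Ho; rewrite big1 // => i _; have /= Hi := H i.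
by apply/eqP; rewrite -leqn0 leqNgt Hi.
Qed.

Definition halving n (F E : 'I_n -> 'I_n -> nat) :=
  [/\ forall i j, F i j <= E i j, forall i, 2 * rs F i = rs E i & forall j, 2 * cs F j = cs E j].
Definition evens n (E : 'I_n -> 'I_n -> nat) :=
  (forall i, 2 %| rs E i) /\ (forall j, 2 %| cs E j).


Lemma rs0 n (i : 'I_n) : rs (fun _ _ => 0) i = 0. Proof. by rewrite /rs big1. Qed.
Lemma cs0 n (i : 'I_n) : cs (fun _ _ => 0) i = 0. Proof. by rewrite /cs big1. Qed.
Lemma tot0 n : tot (fun _ _ : 'I_n => 0) = 0.
Proof. by rewrite /tot big1 // => i _; rewrite big1. Qed.

Lemma halve_step n (E : 'I_n -> 'I_n -> nat) r1 c1 : 0 < E r1 c1 -> evens E ->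
  exists E' : 'I_n -> 'I_n -> nat, [/\ tot E' + 2 = tot E, evens E' & forall F' : 'I_n -> 'I_n -> nat, halving F' E' -> exists F, halving F E].
Proof.
move=> hpos [hr hc].
have [r2 hr2] : exists r2, dl r1 c1 r2 c1 < E r2 c1.
  pose g := fun i => E i c1 - dl r1 c1 i c1.
  have e1 : cs (dl r1 c1) c1 = 1 by rewrite cs_dl eqxx.
  have eq : cs E c1 = \sum_i g i + 1.
    
rewrite -e1 /cs -big_split; apply: eq_bigr => i _; rewrite /= /g subnK //.
    by rewrite /dl; case: (eqVneq i r1) => [->|] //=; rewrite eqxx.
  have : odd (\sum_i g i) by move: (hc c1); rewrite eq dvdn2 oddD addbT negbK.
  by case/odd_pos => i; rewrite /g subn_gt0 => ?; exists i.
case: (eqVneq r2 r1) => [e21 | ne21].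
  subst r2.
  pose E' := fun i j => E i j - (dl r1 c1 i j + dl r1 c1 i j).
  have eqE : forall i j, E i j + 0 = E' i j + (dl r1 c1 i j + dl r1 c1 i j).
    move=> i j; rewrite /E' addn0.
    move: hr2; rewrite /dl !eqxx /=.
    case: (eqVneq i r1) => [->|/negbTE h1]; case: (eqVneq j c1) => [->|/negbTE h2];
      rewrite ?eqxx ?h1 ?h2 /=; lia.
  exists E'; split.
  - by have := tot_eqn eqE; rewrite tot0 tot_add tot_dl; lia.
  - split=> [i|j].
      have := rs_eqn eqE i; rewrite rs0 rs_add rs_dl; have := hr i; lia.
    have := cs_eqn eqE j; rewrite cs0 cs_add cs_dl; have := hc j; lia.
  move=> F' [hle hrF hcF].
  exists (fun i j => F' i j + dl r1 c1 i j); split.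
  - by move=> i j; have := eqE i j; have := hle i j; lia.
  - move=> i; rewrite rs_add rs_dl; have := rs_eqn eqE i; rewrite rs0 rs_add rs_dl.
    have := hrF i; lia.
  - move=> j; rewrite cs_add cs_dl; have := cs_eqn eqE j; rewrite cs0 cs_add cs_dl.
    have := hcF j; lia.
have ne12 : (r2 == r1) = false by apply/negbTE.
have ne12' : (r1 == r2) = false by rewrite eq_sym.
have [c2 hc2] : exists c2, dl r1 c1 r2 c2 + dl r2 c1 r2 c2 < E r2 c2.
  pose g := fun j => E r2 j - (dl r1 c1 r2 j + dl r2 c1 r2 j).
  have e1 : rs (dl r1 c1) r2 + rs (dl r2 c1) r2 = 1 by rewrite !rs_dl eqxx ne12.
  have eq : rs E r2 = \sum_j g j + 1.
    rewrite -e1 /rs -!big_split; apply: eq_bigr => j _; rewrite /= /g subnK //.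
    move: hr2; rewrite /dl ne12 eqxx /=.
    by case: (eqVneq j c1) => [->|] //=; rewrite eqxx.
  have : odd (\sum_j g j) by move: (hr r2); rewrite eq dvdn2 oddD addbT negbK.
  by case/odd_pos => j; rewrite /g subn_gt0 => ?; exists j.
pose S := fun i j => dl r1 c1 i j + dl r2 c1 i j + dl r2 c2 i j.
have hS : forall i j, S i j <= E i j.
  move=> i j; move: hr2 hc2; rewrite /S /dl ?ne12 ?ne12' ?eqxx /=.
  case: (eqVneq i r1) => [->|/negbTE h1]; case: (eqVneq i r2) => [e|/negbTE h2];
  try (rewrite e in ne12'; rewrite eqxx in ne12'; discriminate);
  case: (eqVneq j c1) => [->|/negbTE h3]; case: (eqVneq j c2) => [e'|/negbTE h4];
      try subst; rewrite ?eqxx ?h1 ?h2 ?h3 ?h4 ?ne12 ?ne12' /=; first [lia | case: (eqVneq c2 c1) => [ee|ne]; rewrite ?ee /=; lia].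
pose E' := fun i j => E i j + dl r1 c2 i j - S i j.
have eqE : forall i j, E i j + dl r1 c2 i j = E' i j + S i j.
  by move=> i j; rewrite /E' subnK //; apply: leq_trans (hS i j) (leq_addr _ _).
exists E'; split.
- by have := tot_eqn eqE; rewrite !tot_add !tot_dl; lia.
- split=> [i|j].
    have := rs_eqn eqE i; rewrite !rs_add !rs_dl; have := hr i; lia.
  have := cs_eqn eqE j; rewrite !cs_add !cs_dl; have := hc j; lia.
move=> F' [hle hrF hcF].
case: (posnP (F' r1 c2)) => [hF0|hFp].
  exists (fun i j => F' i j + dl r2 c1 i j); split.
  - move=> i j; have := eqE i j; have := hle i j; rewrite /S /dl.
    have : (i == r1) && (j == c2) -> F' i j = 0 /\ ((i == r2) && (j == c1)) = false.
      by case: (eqVneq i r1) => [->|] //=; case: (eqVneq j c2) => [->|] //= _; rewrite ne12'.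
    case: ((i == r1) && (j == c2)) => /=; last by lia.
    by case=> // -> ->; lia.
  - move=> i; rewrite rs_add rs_dl; have := rs_eqn eqE i; rewrite /S !rs_add !rs_dl.
    have := hrF i; lia.
  - move=> j; rewrite cs_add cs_dl; have := cs_eqn eqE j; rewrite /S !cs_add !cs_dl.
    have := hcF j; lia.
pose F := fun i j => F' i j + dl r1 c1 i j + dl r2 c2 i j - dl r1 c2 i j.
have eqF : forall i j, F i j + dl r1 c2 i j = F' i j + dl r1 c1 i j + dl r2 c2 i j.
  move=> i j; rewrite /F subnK //; rewrite /dl.
  case: (eqVneq i r1) => [->|] //=; case: (eqVneq j c2) => [->|] //=; lia.
exists F; split.
- move=> i j; have := eqE i j; have := hle i j; have := eqF i j; rewrite /S; lia.
- move=> i; have := rs_eqn eqF i; have := rs_eqn eqE i; rewrite /S !rs_add !rs_dl.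
  have := hrF i; lia.
- move=> j; have := cs_eqn eqF j; have := cs_eqn eqE j; rewrite /S !cs_add !cs_dl.
  have := hcF j; lia.
Qed.

Lemma halving0 n (E : 'I_n -> 'I_n -> nat) :
  (forall i j, E i j = 0) -> halving (fun _ _ => 0) E.
Proof.
move=> h; split=> // [i|j]; rewrite ?rs0 ?cs0 /rs /cs big1 //.
Qed.

Lemma le_tot n (E : 'I_n -> 'I_n -> nat) r c : E r c <= tot E.
Proof.
rewrite /tot (bigD1 r) //= (bigD1 c) //=; rewrite -addnA; exact: leq_addr.
Qed.

Lemma halve n (E : 'I_n -> 'I_n -> nat) : evens E -> exists F, halving F E.
Proof.
move: {2}(tot E) (leqnn (tot E)) => N.
elim: N E => [|N IH] E hN hev;
  (case: (pickP (fun p : 'I_n * 'I_n => 0 < E p.1 p.2)) => [[r c] /= hp | H0];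
   [| exists (fun _ _ => 0); apply: halving0 => i j; have /= := H0 (i, j);
      by move/negbT; rewrite lt0n negbK => /eqP]).
  by have := le_tot E r c; lia.
have [E' [ht hev' hF]] := halve_step hp hev.
have [F' hF'] := IH E' ltac:(lia) hev'.
exact: hF hF'.
Qed.


Definition nbr (T T' : finType) (R : T -> T' -> bool) (S : {set T}) : {set T'} :=
  [set y | [exists x in S, R x y]].

Lemma hall_gen (T T' : finType) (y0 : T') N : forall (R : T -> T' -> bool) (A : {set T}),
  #|A| <= N ->
  (forall S : {set T}, S \subset A -> #|S| <= #|nbr R S|) ->
  exists f : T -> T', {in A &, injective f} /\ {in A, forall x, R x (f x)}.
Proof.
elim: N => [|N IH] R A hA hH.
  have A0 : A = set0 by apply: cards0_eq; lia.
  by exists (fun _ => y0); rewrite A0; split => x; rewrite inE.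
case: (set_0Vmem A) => [A0 | [a aA]].
  by exists (fun _ => y0); rewrite A0; split => x; rewrite inE.
case: (boolP [exists S : {set T}, [&& S \subset A, S != set0, S != A & #|nbr R S| <= #|S|]]).
  case/existsP => S0 /and4P [sS0 nz0 neA tight].
  have lt0 : #|S0| < #|A| by rewrite proper_card // properEneq neA sS0.
  have [f1 [inj1 R1]] := IH R S0 ltac:(lia) (fun S sS => hH S (subset_trans sS sS0)).
  pose R2 x y := R x y && (y \notin nbr R S0).
  have cD : #|A :\: S0| + #|S0| = #|A|.
    by rewrite -(cardsID S0 A) (setIidPr sS0) addnC.
  have ps0 : 0 < #|S0| by rewrite card_gt0.
  have [f2 [inj2 R2f]] : exists f : T -> T', {in A :\: S0 &, injective f} /\ {in A :\: S0, forall x, R2 x (f x)}.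
    apply: IH; first by lia.
    move=> S sS.
    have dis : S :&: S0 = set0.
      apply/setP => x; rewrite !inE; apply/andP => -[xS xS0].
      by move/subsetP: sS => /(_ x xS); rewrite !inE xS0.
    have sU : S :|: S0 \subset A.
      rewrite subUset sS0 andbT; apply: subset_trans sS _; exact: subsetDl.
    have h1 := hH _ sU.
    have h2 := cardsUI S S0; rewrite dis cards0 addn0 in h2.
    have h3 : nbr R (S :|: S0) \subset nbr R2 S :|: nbr R S0.
      apply/subsetP => y; rewrite !inE => /existsP [x /andP [xin Rxy]].
      case: (boolP (y \in nbr R S0)) => yN; first by rewrite inE in yN; rewrite yN orbT.
      apply/orP; left; apply/existsP; exists x; rewrite /R2 Rxy yN andbT.
      move: xin; rewrite inE => /orP [-> //| xS0]; case/negP: yN.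
      by rewrite inE; apply/existsP; exists x; rewrite xS0.
    have h4 := subset_leq_card h3.
    have h5 := (leq_card_setU (nbr R2 S) (nbr R S0)).1.
    lia.
  exists (fun x => if x \in S0 then f1 x else f2 x); split.
    move=> x y xA yA /=.
    have NS : forall z, z \in S0 -> f1 z \in nbr R S0.
      by move=> z zS; rewrite inE; apply/existsP; exists z; rewrite zS R1.
    have xD : x \notin S0 -> x \in A :\: S0 by move=> h; rewrite inE h xA.
    have yD : y \notin S0 -> y \in A :\: S0 by move=> h; rewrite inE h yA.
    case: (boolP (x \in S0)) => xS; case: (boolP (y \in S0)) => yS.
    - exact: inj1.
    - move=> e; have := R2f _ (yD yS); rewrite /R2 -e NS //; by rewrite andbF.
    - move=> e; have := R2f _ (xD xS); rewrite /R2 e NS //; by rewrite andbF.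
    - by apply: inj2; [apply: xD | apply: yD].
  move=> x xA /=; case: ifP => xS; first exact: R1.
  have xD : x \in A :\: S0 by rewrite inE xS xA.
by have /andP [] := R2f x xD.
move/existsPn => notight.
have strict : forall S : {set T}, S \subset A -> S != set0 -> S != A -> #|S| < #|nbr R S|.
  by move=> S sS nz ne; have := notight S; rewrite sS nz ne /= -ltnNge.
have [b Rab] : exists b, R a b.
  have : 0 < #|nbr R [set a]|.
    by apply: leq_trans (hH _ _); rewrite ?cards1 // sub1set.
  case/card_gt0P => b; rewrite inE => /existsP [x /andP [/set1P -> Rab]].
  by exists b.
pose R2 x y := R x y && (y != b).
have [f2 [inj2 R2f]] : exists f : T -> T', {in A :\ a &, injective f} /\ {in A :\ a, forall x, R2 x (f x)}.
  apply: IH; first by have := cardsD1 a A; rewrite aA; lia.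
  move=> S sS.
  case: (eqVneq S set0) => [-> | nz]; first by rewrite cards0.
  have sSA : S \subset A by apply: subset_trans sS _; exact: subsetDl.
  have aS : a \notin S by move/subsetP: sS => /(_ a) h; apply/negP => /h; rewrite !inE eqxx.
  have neA : S != A by apply/eqP => eSA; rewrite eSA aA in aS.
  have h1 := strict S sSA nz neA.
  have h3 : nbr R S \subset b |: nbr R2 S.
    apply/subsetP => y; rewrite !inE => /existsP [x /andP [xin Rxy]].
    case: (eqVneq y b) => //= ne; apply/existsP; exists x; by rewrite xin /R2 Rxy ne.
  have h4 := subset_leq_card h3.
  have h5 := cardsU1 b (nbr R2 S).
  lia.
exists (fun x => if x == a then b else f2 x); split.
  move=> x y xA yA /=.
  have xD : x != a -> x \in A :\ a by move=> h; rewrite !inE h xA.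
  have yD : y != a -> y \in A :\ a by move=> h; rewrite !inE h yA.
  case: (eqVneq x a) => [->|xa]; case: (eqVneq y a) => [->|ya] //.
  - move=> e; have := R2f _ (yD ya); rewrite /R2 -e eqxx; by rewrite andbF.
  - move=> e; have := R2f _ (xD xa); rewrite /R2 e eqxx; by rewrite andbF.
  - by apply: inj2; [apply: xD | apply: yD].
move=> x xA /=; case: (eqVneq x a) => [->|xa] //.
have xD : x \in A :\ a by rewrite !inE xa xA.
by have /andP [] := R2f x xD.
Qed.


Lemma le_rs n (U : 'I_n -> 'I_n -> nat) i j : U i j <= rs U i.
Proof. by rewrite /rs (bigD1 j) //=; exact: leq_addr. Qed.

Lemma rs_perm n (s : 'S_n) i : rs (fun i j => (s i == j) : nat) i = 1.
Proof. by rewrite /rs -(sum_eq1 (s i)); apply: eq_bigr => j _; rewrite eq_sym. Qed.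

Lemma cs_perm n (s : 'S_n) j : cs (fun i j => (s i == j) : nat) j = 1.
Proof.
rewrite /cs -(sum_eq1 (s^-1 j)%g); apply: eq_bigr => i _.
by rewrite -{1}(permKV s j) (inj_eq perm_inj).
Qed.

Lemma perm_decomp n (y0 : 'I_n) k : forall U : 'I_n -> 'I_n -> nat,
  (forall i, rs U i = k) -> (forall j, cs U j = k) ->
  exists Q : nat -> 'S_n, forall i j, U i j = \sum_(0 <= a < k) ((Q a i == j) : nat).
Proof.
elim: k => [|k IH] U hr hc.
  exists (fun _ => 1%g) => i j; rewrite big_geq //.
  by have := le_rs U i j; rewrite hr; lia.
pose R i j := 0 < U i j.
have [f [injf Rf]] : exists f : 'I_n -> 'I_n, {in setT &, injective f} /\ {in setT, forall x, R x (f x)}.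
  apply: (hall_gen y0 (leqnn _)) => S _.
  set N := nbr R S.
  have e1 : \sum_(i in S) rs U i = #|S| * k.+1.
    by rewrite (eq_bigr (fun _ => k.+1)) ?sum_nat_const.
  have e2 : forall i, i \in S -> rs U i = \sum_(j in N) U i j.
    move=> i iS; rewrite /rs (bigID (fun j => j \in N)) /= [X in _ + X]big1 ?addn0 // => j jN.
    apply/eqP; rewrite -leqn0 leqNgt; apply/negP => pos; case/negP: jN.
    by rewrite inE; apply/existsP; exists i; rewrite iS.
  have e3 : \sum_(i in S) \sum_(j in N) U i j <= \sum_i \sum_(j in N) U i j.
    by rewrite [X in _ <= X](bigID (fun i => i \in S)) /=; exact: leq_addr.
  have e4 : \sum_i \sum_(j in N) U i j = #|N| * k.+1.
    by rewrite exchange_big /= (eq_bigr (fun _ => k.+1)) ?sum_nat_const // => j _; apply: hc.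
  rewrite -(leq_pmul2r (ltn0Sn k)) -e1 -e4 (eq_bigr _ e2); exact: e3.
have injf' : injective f by move=> x y; apply: injf; rewrite inE.
pose s := perm injf'.
have hs : forall i, 0 < U i (s i) by move=> i; rewrite permE; apply: Rf; rewrite inE.
pose U' i j := U i j - (s i == j).
have eqU : forall i j, U' i j + (s i == j) = U i j + 0.
  move=> i j; rewrite addn0 subnK //; case: (eqVneq (s i) j) => [<-|] //=.
have [Q' hQ'] : exists Q : nat -> 'S_n, forall i j, U' i j = \sum_(0 <= a < k) ((Q a i == j) : nat).
  apply: IH => [i|j].
    by have := rs_eqn eqU i; rewrite rs_perm rs0 hr; lia.
  by have := cs_eqn eqU j; rewrite cs_perm cs0 hc; lia.
exists (fun a => if a == k then s else Q' a) => i j.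
rewrite big_nat_recr //= eqxx.
rewrite (eq_big_nat _ _ (F2 := fun a => (Q' a i == j) : nat)); last first.
  by move=> a /andP [_ ak]; rewrite (ltn_eqF ak).
by rewrite -hQ' eqU addn0.
Qed.

Import GRing.Theory Num.Theory.
Local Open Scope ring_scope.


Definition in3 (x : int) : bool := x \in [:: 0; 1; -1].

Lemma alt_of_filter (s : seq int) : all in3 s ->
  ([seq x <- s | x != 0] = [:: 1] \/ [seq x <- s | x != 0] = [:: 1; -1; 1]) -> alt_sign s.
Proof. by move=> ha [] e; rewrite /alt_sign e ha /= ?expr0 ?expr1 ?expr2 ?mulrNN ?mulr1. Qed.

Lemma sum_sign p : \sum_(i <- iota 0 p.*2.+1) (-1 : int) ^+ i = 1.
Proof.
elim: p => [|p IH]; first by rewrite big_cons big_nil expr0 addr0.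
rewrite doubleS -addn2 iotaD big_cat IH add0n /= !big_cons big_nil.
rewrite (exprS _ p.*2.+1); lia.
Qed.

Lemma alt_sum (s : seq int) : alt_sign s -> \sum_(x <- s) x = 1.
Proof.
case/and3P => _ ho /eqP e.
rewrite (bigID (fun x => x != 0)) /= [X in _ + X]big1 ?addr0; last by move=> x /negbNE /eqP.
rewrite -big_filter e big_map.
move: ho; set m := size _ => ho.
have -> : m = (m./2).*2.+1 by rewrite -[m in LHS](odd_double_half m) ho.
exact: sum_sign.
Qed.

Definition is01 (x : int) : bool := (x == 0) || (x == 1).

Lemma filter01 (s : seq int) : all is01 s ->
  exists c : nat, \sum_(x <- s) x = c%:Z /\ [seq x <- s | x != 0] = nseq c 1.
Proof.
elim: s => [|x s IH] /=; first by exists 0%N; rewrite big_nil.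
case/andP => /orP [] /eqP -> /IH [c [hs hf]].
  by exists c; rewrite big_cons hs add0r.
by exists c.+1; rewrite big_cons hs /= hf; split => //; lia.
Qed.

Lemma alt01 (s : seq int) : all is01 s -> \sum_(x <- s) x = 1 -> alt_sign s.
Proof.
move=> ha hs; have [c [hc hf]] := filter01 ha.
have c1 : c = 1%N by move: hs; rewrite hc; lia.
apply: alt_of_filter; last by left; rewrite hf c1.
by apply/allP => x /(allP ha); rewrite /is01 /in3 !inE => /orP [] ->; rewrite ?orbT.
Qed.


Lemma line_sum n (f : 'I_n -> int) : \sum_(x <- line f) x = \sum_i f i.
Proof. by rewrite /line big_map big_enum. Qed.

Lemma line_all n (f : 'I_n -> int) (P : pred int) : (forall i, P (f i)) -> all P (line f).
Proof. by move=> h; apply/allP => x /mapP [i _ ->]. Qed.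

Lemma line_in n (f : 'I_n -> int) (P : pred int) : all P (line f) -> forall i, P (f i).
Proof. by move=> /allP h i; apply: h; apply: map_f; rewrite mem_enum. Qed.

Lemma line_ext n (f g : 'I_n -> int) : f =1 g -> line f = line g.
Proof. by move=> h; apply: eq_map. Qed.

Lemma nat01 (b : bool) : is01 ((b : nat)%:R).
Proof. by case: b. Qed.

Lemma perm_line_row n (s : 'S_n) i : alt_sign (line (fun j => (perm_mx s : 'M[int]_n) i j)).
Proof.
apply: alt01; first by apply: line_all => j; rewrite /perm_mx !mxE nat01.
rewrite line_sum (eq_bigr (fun j => ((s i == j) : nat)%:R)); last by move=> j _; rewrite /perm_mx !mxE.
by rewrite -natr_sum; have := rs_perm s i; rewrite /rs => ->.
Qed.

Lemma perm_line_col n (s : 'S_n) j : alt_sign (line (fun i => (perm_mx s : 'M[int]_n) i j)).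
Proof.
apply: alt01; first by apply: line_all => i; rewrite /perm_mx !mxE nat01.
rewrite line_sum (eq_bigr (fun i => ((s i == j) : nat)%:R)); last by move=> i _; rewrite /perm_mx !mxE.
by rewrite -natr_sum; have := cs_perm s j; rewrite /cs => ->.
Qed.

Lemma count_line n (f : 'I_n -> int) : (forall j, in3 (f j)) -> \sum_j f j = 1 ->
  (\sum_j ((f j == 0%R) : nat) + 2 * \sum_j ((f j == (-1)%R) : nat) = n.-1)%N.
Proof.
move=> hin hs.
have h1 : (\sum_j ((f j == 1%R) : nat) + \sum_j ((f j == (-1)%R) : nat) + \sum_j ((f j == 0%R) : nat) = n)%N.
  rewrite -!big_split /= -[n in RHS]card_ord -sum1_card; apply: eq_bigr => j _.
  by move: (hin j); rewrite /in3 !inE => /or3P [] /eqP ->.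
have h2 : \sum_j f j = (\sum_j ((f j == 1%R) : nat))%:R - (\sum_j ((f j == (-1)%R) : nat))%:R.
  rewrite !natr_sum -sumrB; apply: eq_bigr => j _.
  by move: (hin j); rewrite /in3 !inE => /or3P [] /eqP ->.
move: h2; rewrite hs !natz; lia.
Qed.

Lemma vert_line k (h : nat -> int) : line (fun s : 'I_(2*k+1) => h (val s)) =
  [seq h a | a <- iota 0 k] ++ h k :: [seq h (k.+1 + a)%N | a <- iota 0 k].
Proof.
rewrite /line.
have -> : [seq h (val s) | s <- enum 'I_(2*k+1)] = [seq h x | x <- map val (enum 'I_(2*k+1))].
  by rewrite -map_comp.
rewrite val_enum_ord (_ : (2 * k + 1 = k + k.+1)%N); last by lia.
rewrite iotaD add0n /= map_cat /=; congr (_ ++ _ :: _).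
by rewrite -[in iota k.+1 k](addn0 k.+1) iotaDl -map_comp.
Qed.

Lemma seg01 n k (Q : nat -> 'S_n) i j (u : nat) :
  u = \sum_(0 <= a < k) ((Q a i == j) : nat) ->
  all is01 [seq (((Q a i == j) : nat)%:R : int) | a <- iota 0 k] /\
  [seq x <- [seq (((Q a i == j) : nat)%:R : int) | a <- iota 0 k] | x != 0] = nseq u 1.
Proof.
move=> hu.
have ha : all is01 [seq (((Q a i == j) : nat)%:R : int) | a <- iota 0 k].
  by apply/allP => x /mapP [a _ ->]; apply: nat01.
split=> //; have [c [hc hf]] := filter01 ha.
rewrite hf; congr nseq.
move: hc; rewrite big_map -natr_sum hu /index_iota subn0 natz.
by move=> /eqP; rewrite eqz_nat eq_sym => /eqP.
Qed.

Lemma all01_in3 (s : seq int) : all is01 s -> all in3 s.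
Proof.
by move/allP => h; apply/allP => x /h; rewrite /is01 /in3 !inE => /orP [] ->; rewrite ?orbT.
Qed.


Lemma alt_sign_all (s : seq int) : alt_sign s -> all in3 s.
Proof. by case/and3P. Qed.

Unset Implicit Arguments.

(* n = 2k+1; planes indexed 0..2k, so the (k+1)-st plane has index k. *)
Theorem mainTheorem17 (k : nat) (B : 'M[int]_(2 * k + 1)) :
  is_ASM B ->
  exists P : 'I_(2 * k + 1) -> 'M[int]_(2 * k + 1),
    (forall s : 'I_(2 * k + 1), (s != k :> nat) -> is_perm_mx (P s)) /\
    is_ASHM (fun s i j => if (s == k :> nat) then B i j else P s i j).
Proof.
case/andP => /forallP hrow /forallP hcol.
have hin : forall i j, in3 (B i j) by move=> i; apply: line_in (alt_sign_all (hrow i)).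
have hinc : forall i j, in3 (B i j) by move=> i j; apply: (line_in (alt_sign_all (hcol j))).
have hrs : forall i, \sum_j B i j = 1 by move=> i; rewrite -line_sum; apply: alt_sum.
have hcs : forall j, \sum_i B i j = 1 by move=> j; rewrite -line_sum; apply: alt_sum.
pose E := fun i j => ((B i j == 0) : nat).
pose D := fun i j => ((B i j == -1) : nat).
have cr : forall i, (rs E i + 2 * rs D i = 2 * k)%N.
  by move=> i; have := count_line (hin i) (hrs i); rewrite /rs /E /D => ->; rewrite addn1.
have cc : forall j, (cs E j + 2 * cs D j = 2 * k)%N.
  by move=> j; have := count_line (fun i => hin i j) (hcs j); rewrite /cs /E /D => ->; rewrite addn1.
have evE : evens E by split=> [i|j]; [have := cr i | have := cc j]; lia.
have [F [hFE hrF hcF]] := halve evE.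
pose U := fun i j => (D i j + F i j)%N.
pose L := fun i j => (D i j + (E i j - F i j))%N.
have eEF : forall i j, ((E i j - F i j) + F i j = E i j + 0)%N.
  by move=> i j; rewrite addn0 subnK.
have hrU : forall i, rs U i = k by move=> i; rewrite rs_add; have := cr i; have := hrF i; lia.
have hcU : forall j, cs U j = k by move=> j; rewrite cs_add; have := cc j; have := hcF j; lia.
have hrL : forall i, rs L i = k.
  move=> i; rewrite rs_add; have := rs_eqn eEF i; rewrite rs0.
  have := cr i; have := hrF i; lia.
have hcL : forall j, cs L j = k.
  move=> j; rewrite cs_add; have := cs_eqn eEF j; rewrite cs0.
  have := cc j; have := hcF j; lia.
have y0 : 'I_(2 * k + 1) by apply: (@Ordinal _ 0); rewrite addn1.
have [Qu hQu] := perm_decomp y0 hrU hcU.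
have [Ql hQl] := perm_decomp y0 hrL hcL.
exists (fun s : 'I_(2 * k + 1) => if (s < k)%N then perm_mx (Qu s) else perm_mx (Ql (s - k.+1)%N)).
split; first by move=> s _; case: ifP => _; apply: perm_mx_is_perm.
apply/andP; split; [apply/andP; split|]; apply/forallP => s; apply/forallP => i.
- case: (boolP (s == k :> nat)) => hs; first by apply: hrow.
  case: ifP => _; apply: perm_line_row.
- case: (boolP (s == k :> nat)) => hs; first by apply: hcol.
  case: ifP => _; apply: perm_line_col.
rename s into i0; rename i into j; rename i0 into i.
pose hv := fun m : nat => if m == k then B i j else if (m < k)%N then (((Qu m i == j) : nat)%:R : int)
  else (((Ql (m - k.+1)%N i == j) : nat)%:R : int).
rewrite (line_ext (g := fun s => hv (val s))); last first.
  move=> s; rewrite /hv; case: (s == k :> nat) => //; case: ifP => _; by rewrite /perm_mx !mxE.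
rewrite vert_line.
have -> : [seq hv a | a <- iota 0 k] = [seq (((Qu a i == j) : nat)%:R : int) | a <- iota 0 k].
  apply/eq_in_map => a; rewrite mem_iota add0n => /andP [_ ak]; rewrite /hv (ltn_eqF ak) ak //.
have -> : [seq hv (k.+1 + a)%N | a <- iota 0 k] = [seq (((Ql a i == j) : nat)%:R : int) | a <- iota 0 k].
  apply/eq_map => a; rewrite /hv; have -> : (k.+1 + a == k)%N = false by lia.
  have -> : (k.+1 + a < k)%N = false by lia.
  by rewrite addKn.
have -> : hv k = B i j by rewrite /hv eqxx.
have [aU fU] := seg01 (hQu i j).
have [aL fL] := seg01 (hQl i j).
apply: alt_of_filter.
  by rewrite all_cat /= (all01_in3 aU) (all01_in3 aL) hin.
rewrite filter_cat /= fU fL.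
have hF := hFE i j; rewrite /U /L /E /D.
move: hF; rewrite /E; move: (hin i j); rewrite /in3 !inE => /or3P [] /eqP ->.
- case: (F i j) => [|[|f]] //= _; by left.
- have f10 : ((1:int) == 0) = false by [].
  have f1m : ((1:int) == -1) = false by [].
  rewrite f10 f1m /= => hF; have -> : F i j = 0%N by lia.
  by left.
- have fm0 : ((-1:int) == 0) = false by [].
  rewrite fm0 eqxx /= => hF; have -> : F i j = 0%N by lia.
  by right.
Qed.
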